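(* Let $\|\cdot\|_u$ be a unitarily-invariant norm on $\mathbb{M}_n(\mathbb{C})$, let $P\in\mathbb{M}_n(\mathbb{C})$ be an (orthogonal) projection and let $Q\in\mathbb{M}_n(\mathbb{C})$ be an idempotent ($Q^2=Q$). If $\|P\|_u=\|Q\|_u$ and $\|I_n-P\|_u=\|I_n-Q\|_u$, then $Q$ is an orthogonal projection (i.e. $Q=Q^*$).
   Context: A norm $\|\cdot\|_u$ on $\mathbb{M}_n(\mathbb{C})$ is unitarily-invariant if $\|UXV\|_u=\|X\|_u$ for all $X$ and all unitaries $U,V$. A projection means $P=P^2=P^*$. *)

(* Defs.v *)
(* Complex matrices over a generic numClosedFieldType C
   (the abstract algebraic closure of a real closed field, e.g. the complex numbers). *)
From HB Require Import structures.
From mathcomp Require Import all_boot all_order all_algebra.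
From mathcomp Require Export spectral.
Set Implicit Arguments. Unset Strict Implicit. Unset Printing Implicit Defensive.
Import Order.TTheory GRing.Theory Num.Theory.
Local Open Scope ring_scope.

(* Conjugate transpose M^* ; convertible to spectral.v's  M ^t*  = (M^T) ^ conjC. *)
Definition adj_mx (C : numClosedFieldType) m n (M : 'M[C]_(m, n)) : 'M[C]_(n, m) :=
  map_mx (@Num.conj_op C) (M^T).

(* A norm on M_n(C); values are taken in C and are required to be >= 0
   (hence real). *)
Definition is_mxnorm (C : numClosedFieldType) (n : nat) (N : 'M[C]_n -> C) : Prop :=
  [/\ forall X, 0 <= N X,
      forall X, N X = 0 -> X = 0,
      forall (a : C) X, N (a *: X) = `|a| * N X
    & forall X Y, N (X + Y) <= N X + N Y].

Definition unitarily_invariant (C : numClosedFieldType) (n : nat) (N : 'M[C]_n -> C) : Prop :=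
  forall (U V X : 'M[C]_n), U \is unitarymx -> V \is unitarymx ->
    N (U *m X *m V) = N X.

Definition is_projection (C : numClosedFieldType) (n : nat) (P : 'M[C]_n) : Prop :=
  P *m P = P /\ adj_mx P = P.

Definition is_idempotent (C : numClosedFieldType) (n : nat) (Q : 'M[C]_n) : Prop :=
  Q *m Q = Q.

(* Main.v *)
Require Import Defs.
From mathcomp Require Import all_boot all_order all_algebra.
From mathcomp Require Import spectral sesquilinear.
From mathcomp Require Import ring.
From mathcomp Require Import fingroup perm.
From mathcomp Require Import zify.
Import Order.TTheory GRing.Theory Num.Theory.
Local Open Scope ring_scope.
Local Open Scope sesquilinear_scope.
Set Implicit Arguments. Unset Strict Implicit. Unset Printing Implicit Defensive.

Lemma adjE (C : numClosedFieldType) n (A : 'M[C]_n) : adj_mx A = A ^t*.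
Proof. by []. Qed.

Lemma diag_unitary (C : numClosedFieldType) n (d : 'rV[C]_n) :
  (forall i, d 0 i * (d 0 i)^* = 1) -> diag_mx d \is unitarymx.
Proof.
move=> hd; apply/unitarymxP; rewrite tr_diag_mx map_diag_mx mul_diag_mx.
apply/matrixP => i j; rewrite !mxE; case: (eqVneq i j) => [->|ij].
  by rewrite !mulr1n hd.
by rewrite !mulr0n mulr0.
Qed.

Definition pinch (C : numClosedFieldType) n (A : 'M[C]_n) (p q : 'I_n -> bool) :=
  \matrix_(i, j) (if p i == q j then A i j else 0).

Definition sgb (C : numClosedFieldType) (b : bool) : C := if b then -1 else 1.

Lemma half2 (C : numClosedFieldType) (x : C) : x = 2^-1 * (x + x).
Proof. by field. Qed.

Lemma pinch_le (C : numClosedFieldType) n (N : 'M[C]_n -> C) (A : 'M[C]_n) (p q : 'I_n -> bool) :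
  is_mxnorm N -> unitarily_invariant N -> N (pinch A p q) <= N A.
Proof.
move=> [N0 Ndef NZ ND] NU.
set U := diag_mx (\row_i sgb C (p i)).
set V := diag_mx (\row_i sgb C (q i)).
have uU : forall (b : 'I_n -> bool), diag_mx (\row_i sgb C (b i)) \is unitarymx.
  move=> b; apply: diag_unitary => i; rewrite mxE /sgb.
  by case: (b i); rewrite ?rmorphN rmorph1 ?mulrNN mulr1.
have -> : pinch A p q = 2^-1 *: (A + U *m A *m V).
  rewrite mul_mx_diag mul_diag_mx; apply/matrixP => i j; rewrite !mxE /sgb.
  case: (p i); case: (q j) => /=;
   rewrite ?mulN1r ?mulrN1 ?mul1r ?mulr1 ?opprK ?subrr ?mulr0 //;
   by apply: half2.
have h := ND A (U *m A *m V); rewrite NU ?uU // in h.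
rewrite NZ normfV normr_nat; apply: (le_trans (ler_wpM2l _ h)).
  by rewrite invr_ge0 ler0n.
by rewrite -half2.
Qed.

Lemma tperm_unitary (C : numClosedFieldType) n (a b : 'I_n) :
  (tperm_mx a b : 'M[C]_n) \is unitarymx.
Proof.
apply/unitarymxP.
have -> : (tperm_mx a b : 'M[C]_n) ^t* = tperm_mx a b.
  rewrite tr_tperm_mx; apply/matrixP => i j; rewrite !mxE.
  by case: (_ == _); rewrite ?rmorph1 ?rmorph0.
by rewrite /tperm_mx -perm_mxM tperm2 perm_mx1.
Qed.

Lemma swap_diag (C : numClosedFieldType) n (N : 'M[C]_n -> C) (d : 'rV[C]_n) (a b : 'I_n) :
  unitarily_invariant N ->
  N (diag_mx (\row_i d 0 (tperm a b i))) = N (diag_mx d).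
Proof.
move=> NU; rewrite -(NU (tperm_mx a b) (tperm_mx a b)) ?tperm_unitary //.
congr N; rewrite -xrowE -xcolE; apply/matrixP => i j; rewrite !mxE.
by rewrite tpermK (inj_eq (@perm_inj _ (tperm a b))).
Qed.

Definition Dset (C : numClosedFieldType) n (S : {set 'I_n}) : 'M[C]_n :=
  diag_mx (\row_i (i \in S)%:R).

Lemma Dsub (C : numClosedFieldType) n (N : 'M[C]_n -> C) (S T : {set 'I_n}) :
  is_mxnorm N -> unitarily_invariant N -> S \subset T ->
  N (Dset C S) <= N (Dset C T).
Proof.
move=> Nn NU sST; have <- : pinch (Dset C T) (fun i => i \in S) (fun _ => true) = Dset C S.
  apply/matrixP => i j; rewrite !mxE eqb_id.
  case: (eqVneq i j) => [->|ij]; last by rewrite !mulr0n if_same.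
  case iS: (j \in S) => //; by rewrite (subsetP sST _ iS).
exact: pinch_le.
Qed.

Lemma Dcard (C : numClosedFieldType) n (N : 'M[C]_n -> C) (A B : {set 'I_n}) :
  is_mxnorm N -> unitarily_invariant N -> (#|A| <= #|B|)%N ->
  N (Dset C A) <= N (Dset C B).
Proof.
move=> Nn NU; have [k] := ubnP #|A :\: B|; elim: k A => // k IH A.
rewrite ltnS => hk hAB.
case: (set_0Vmem (A :\: B)) => [e|[i]].
  by apply: Dsub => //; rewrite -setD_eq0 e.
rewrite inE => /andP[iB iA].
case: (set_0Vmem (B :\: A)) => [e|[j]].
  have sBA : B \subset A by rewrite -setD_eq0 e.
  have : B == A by rewrite eqEcard sBA hAB.
  by move/eqP => eBA; move: iB; rewrite eBA iA.
rewrite inE => /andP[jA jB].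
pose A' := [set x | tperm i j x \in A].
have hA : N (Dset C A') = N (Dset C A).
  rewrite /Dset -(swap_diag (\row_x (x \in A)%:R) i j NU); congr N.
  by congr diag_mx; apply/rowP => x; rewrite !mxE inE.
rewrite -hA; apply: IH.
  apply: leq_trans hk; apply: (@leq_ltn_trans #|(A :\: B) :\ i|).
    apply: subset_leq_card; apply/subsetP => x; rewrite !inE => /andP[xB xA'].
    have xi : x != i by apply/eqP => exi; move: xA'; rewrite exi tpermL (negbTE jA).
    have xj : x != j by apply/eqP => exj; move: xB; rewrite exj jB.
    by rewrite xi xB; move: xA'; rewrite tpermD // eq_sym.
  by rewrite (cardsD1 i (A :\: B)) !inE iB iA.
by rewrite card_preimset //; exact: perm_inj.
Qed.

Definition Dt (C : numClosedFieldType) n (S : {set 'I_n}) (a : 'I_n) (t : C) : 'M[C]_n :=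
  diag_mx (\row_i (if i == a then t else (i \in S)%:R)).

Lemma Dt1 (C : numClosedFieldType) n (S : {set 'I_n}) a :
  a \in S -> Dt S a (1 : C) = Dset C S.
Proof.
move=> aS; congr diag_mx; apply/rowP => i; rewrite !mxE.
by case: eqP => // ->; rewrite aS.
Qed.

Lemma strict_diag (C : numClosedFieldType) n (N : 'M[C]_n -> C) (t : C) :
  is_mxnorm N -> unitarily_invariant N -> 1 < t ->
  forall (S : {set 'I_n}) a, a \in S -> ~ (N (Dt S a t) <= N (Dset C S)).
Proof.
move=> Nn NU t1; have [N0 Ndef NZ ND] := Nn.
have t0 : 0 < t by apply: lt_trans t1.
move=> S; have [k] := ubnP #|S|; elim: k S => // k IH S.
rewrite ltnS => hk a aS H.
set l := 1 - t^-1.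
have l0 : 0 < l by rewrite subr_gt0 invf_lt1.
have l1 : 0 <= 1 - l by rewrite /l opprB addrC subrK invr_ge0 ltW.
have eD : Dset C S = l *: Dset C (S :\ a) + (1 - l) *: Dt S a t.
  apply/matrixP => i j; rewrite !mxE; case: (eqVneq i j) => [->|ij]; last first.
    by rewrite !mulr0n !mulr0 addr0.
  rewrite !mulr1n !inE; case: (eqVneq j a) => [->|ia] /=.
    by rewrite aS mulr0 add0r /l opprB addrC subrK mulVf // gt_eqF.
  by rewrite -mulrDl addrC subrK mul1r.
have H1 : N (Dset C S) <= N (Dset C (S :\ a)).
  have := ND (l *: Dset C (S :\ a)) ((1 - l) *: Dt S a t).
  rewrite -eD !NZ (ger0_norm (ltW l0)) (ger0_norm l1) => h.
  have h2 : N (Dset C S) <= l * N (Dset C (S :\ a)) + (1 - l) * N (Dset C S).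
    apply: (le_trans h); rewrite lerD2l; exact: ler_wpM2l.
  rewrite -subr_ge0 in h2.
  have e : forall x y : C, l * x + (1 - l) * y - y = l * (x - y) by move=> x y; ring.
  by rewrite e pmulr_rge0 // subr_ge0 in h2.
case: (set_0Vmem (S :\ a)) => [e|[a' a'S]].
  have : N (Dset C S) = 0.
    apply/eqP; rewrite eq_le N0 andbT; apply: (le_trans H1).
    rewrite e; have -> : Dset C (set0 : {set 'I_n}) = 0 :> 'M[C]_n.
      by apply/matrixP => i j; rewrite !mxE inE mul0rn.
    by rewrite -(scale0r 0) NZ normr0 mul0r.
  move=> /Ndef e0; have := congr1 (fun M : 'M[C]_n => M a a) e0; rewrite !mxE eqxx aS mulr1n => /eqP.
  by rewrite oner_eq0.
have a'a : a' != a by move: a'S; rewrite !inE => /andP[].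
apply: (IH (S :\ a) _ a' a'S).
  by apply: leq_trans hk; rewrite (cardsD1 a S) aS.
apply: le_trans H1.
have E1 : N (Dt (S :\ a) a' t) =
    N (pinch (Dt S a t) (fun i => i == a') (fun _ => false)).
  rewrite /Dt -(swap_diag _ a a' NU); congr N.
  apply/matrixP => i j; rewrite !mxE; case: (eqVneq i j) => [->|ij]; last first.
    by rewrite !mulr0n if_same.
  rewrite !mulr1n !inE.
  case: (tpermP a a' j) => [->|->|ja ja'].
  - by rewrite !eqxx (eq_sym a a') (negbTE a'a).
  - by rewrite eqxx eq_sym (negbTE a'a) /= eqxx.
  - by move/eqP: ja => ja; move/eqP: ja' => ja'; rewrite (negbTE ja') (negbTE ja).
rewrite E1; apply: le_trans H; exact: pinch_le.
Qed.

Definition Vf (C : numClosedFieldType) n (a b : 'I_n) (y t : C) (i j : 'I_n) : C :=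
  (if i == a then (if j == a then t^-1 else if j == b then y / t else 0)
     else if i == b then (if j == a then - y^* / t else if j == b then t^-1 else 0)
     else (i == j)%:R).

Definition Vrot (C : numClosedFieldType) n (a b : 'I_n) (y t : C) : 'M[C]_n :=
  \matrix_(i, j) Vf a b y t i j.

Lemma Vrot_unitary (C : numClosedFieldType) n (a b : 'I_n) (y t : C) :
  a != b -> t^* = t -> t * t = 1 + y * y^* -> t != 0 -> Vrot a b y t \is unitarymx.
Proof.
move=> ab tc tt t0; apply/unitarymxP; apply/matrixP => i k; rewrite !mxE.
have ba : b != a by rewrite eq_sym.
have Vo : forall i j, i != a -> i != b -> Vf a b y t i j = (i == j)%:R.
  by move=> i' j ia ib; rewrite /Vf (negbTE ia) (negbTE ib).
have Vo2 : forall i j, j != a -> j != b -> Vf a b y t i j = (i == j)%:R.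
  move=> i' j ja jb; rewrite /Vf; case: (eqVneq i' a) => [->|ia].
    by rewrite (negbTE ja) (negbTE jb) eq_sym (negbTE ja).
  by case: (eqVneq i' b) => [->|ib]; rewrite ?(negbTE ja) ?(negbTE jb) // eq_sym (negbTE jb).
case: (boolP ((i != a) && (i != b))) => [/andP[ia ib]|hi].
  rewrite (bigD1 i) //= big1 => [|j ji]; last first.
    by rewrite !mxE Vo // eq_sym (negbTE ji) mul0r.
  rewrite !mxE Vo // eqxx mul1r addr0.
  case: (eqVneq k i) => [->|ki]; first by rewrite Vo // eqxx rmorph1.
  rewrite /=.
  case: (boolP ((k != a) && (k != b))) => [/andP[ka kb]|hk].
    by rewrite Vo // (negbTE ki) rmorph0.
  by rewrite Vo2 // (negbTE ki) rmorph0.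
case: (boolP ((k != a) && (k != b))) => [/andP[ka kb]|hk].
  rewrite (bigD1 k) //= big1 => [|j jk]; last first.
    by rewrite !mxE (Vo k j ka kb) eq_sym (negbTE jk) rmorph0 mulr0.
  rewrite !mxE (Vo k k ka kb) eqxx rmorph1 mulr1 addr0.
  have ik : i != k by apply: contraNneq hi => ->; rewrite ka kb.
  by rewrite Vo2 // (negbTE ik).
rewrite (bigD1 a) //= (bigD1 b) //= big1 => [|j /andP[ja jb]]; last first.
  rewrite !mxE.
  have -> : Vf a b y t i j = 0.
    rewrite Vo2 //; apply/eqP; rewrite pnatr_eq0 eqb0.
    by apply: contra hi => /eqP ->; rewrite ja.
  by rewrite mul0r.
rewrite addr0 !mxE.
have tc2 : (Num.Num_conj__canonical__GRing_RMorphism C) t = t by exact: tc.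
have yc2 : (Num.Num_conj__canonical__GRing_RMorphism C) y^* = y by exact: conjCK.
move: hi hk; rewrite !negb_and !negbK.
case/orP => /eqP ->; case/orP => /eqP ->; rewrite /Vf !eqxx ?(negbTE ab) ?(negbTE ba) /=.
all: rewrite !(rmorphM, fmorphV, rmorphN) ?yc2 tc2.
- rewrite -[RHS](mulfV (mulf_neq0 t0 t0)) {1}tt; field; exact: t0.
- field; exact: t0.
- field; exact: t0.
- rewrite -[RHS](mulfV (mulf_neq0 t0 t0)) {1}tt; field; exact: t0.
Qed.

Lemma Dfact (C : numClosedFieldType) n (S : {set 'I_n}) (a b : 'I_n) (y t : C) :
  a \in S -> b \notin S -> t != 0 ->
  Dset C S + y *: delta_mx a b = Dt S a t *m Vrot a b y t.
Proof.
move=> aS bS t0; have ab : a != b by apply: contraNneq bS => <-.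
rewrite /Dt mul_diag_mx; apply/matrixP => i j; rewrite !mxE /Vf.
case: (eqVneq i a) => [->|ia].
  rewrite aS /=; case: (eqVneq j a) => [->|ja].
    by rewrite (negbTE ab) mulr0 addr0 mulfV.
  case: (eqVneq j b) => [_|jb].
    by rewrite mulr1 add0r mulrC mulfVK.
  by rewrite /= mulr0n !mulr0 addr0.
case: (eqVneq i b) => [->|ib].
  by rewrite (negbTE bS) /= mul0rn mul0r mulr0 addr0.
by rewrite /= mulr0 addr0 mulr_natr.
Qed.

Lemma strict_off (C : numClosedFieldType) n (N : 'M[C]_n -> C) (S : {set 'I_n})
  (a b : 'I_n) (y : C) :
  is_mxnorm N -> unitarily_invariant N -> a \in S -> b \notin S -> y != 0 ->
  ~ (N (Dset C S + y *: delta_mx a b) <= N (Dset C S)).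
Proof.
move=> Nn NU aS bS y0.
have ab : a != b by apply: contraNneq bS => <-.
have yy : 0 < y * y^* by rewrite mul_conjC_gt0.
set s := 1 + y * y^*.
have s0 : 0 <= s by rewrite addr_ge0 // ltW.
set t := sqrtC s.
have t1 : 1 < t.
  rewrite /t -sqrtC1 ltr_sqrtC ?qualifE /= ?ler01 //.
  by rewrite /s ltrDl.
have t0 : t != 0 by rewrite gt_eqF // (lt_trans ltr01 t1).
have tc : t^* = t by rewrite geC0_conj // sqrtC_ge0.
have tt : t * t = 1 + y * y^* by rewrite -expr2 sqrtCK.
rewrite (Dfact y aS bS t0).
have -> : N (Dt S a t *m Vrot a b y t) = N (Dt S a t).
  by rewrite -{1}[Dt S a t]mul1mx NU // ?Vrot_unitary //; apply/unitarymxP; rewrite trmx1 map_mx1 mulmx1.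
exact: strict_diag.
Qed.

Lemma conjM (C : numClosedFieldType) n (M A B : 'M[C]_n) : M \is unitarymx ->
  (M *m A *m M^t*) *m (M *m B *m M^t*) = M *m (A *m B) *m M^t*.
Proof.
move=> Mu; rewrite !mulmxA; congr (_ *m _).
by rewrite mulmxKtV.
Qed.

Lemma projdiag (C : numClosedFieldType) n (P : 'M[C]_n) : is_projection P ->
  exists2 M : 'M[C]_n, M \is unitarymx & exists S, M *m P *m M^t* = Dset C S.
Proof.
move=> [PP Pa]; rewrite adjE in Pa.
have Pn : P \is normalmx by apply/normalmxP; rewrite Pa.
set M := spectralmx P; have Mu : M \is unitarymx := spectral_unitarymx P.
have eP := orthomx_spectralP Pn; rewrite -/M invmx_unitary // in eP.
set d := spectral_diag P in eP.
have ed : M *m P *m M^t* = diag_mx d.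
  rewrite {1}eP !mulmxA (unitarymxP Mu) mul1mx -mulmxA (unitarymxP Mu) mulmx1.
  done.
exists M => //; exists [set i | d 0 i != 0]; rewrite ed.
have dd : diag_mx d *m diag_mx d = diag_mx d by rewrite -ed conjM // PP.
congr diag_mx; apply/rowP => i; rewrite !mxE inE.
have := congr1 (fun X : 'M[C]_n => X i i) dd; rewrite mul_diag_mx !mxE eqxx mulr1n.
case: (eqVneq (d 0 i) 0) => [->|di] //= h.
by apply: (mulfI di); rewrite h mulr1.
Qed.

Lemma idemstruct (C : numClosedFieldType) n (Q : 'M[C]_n) : is_idempotent Q ->
  exists2 M : 'M[C]_n, M \is unitarymx & exists NZ : {set 'I_n},
    (forall i m, m \in NZ -> (M *m Q *m M^t*) i m = (i == m)%:R) /\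
    (forall m j, m \notin NZ -> (M *m Q *m M^t*) m j = 0).
Proof.
rewrite /is_idempotent => QQ.
set H := Q *m Q^t*.
have Ha : H^t* = H by rewrite /H trmx_mul map_mxM trmxCK.
have Hn : H \is normalmx by apply/normalmxP; rewrite Ha.
set M := spectralmx H; have Mu : M \is unitarymx := spectral_unitarymx H.
have eH := orthomx_spectralP Hn; rewrite -/M invmx_unitary // in eH.
set d := spectral_diag H in eH.
have ed : M *m H *m M^t* = diag_mx d.
  by rewrite {1}eH !mulmxA (unitarymxP Mu) mul1mx -mulmxA (unitarymxP Mu) mulmx1.
exists M => //; exists [set i | d 0 i != 0].
set Q' := M *m Q *m M^t*.
have QQ' : Q' *m Q' = Q' by rewrite conjM // QQ.
have G : Q' *m Q'^t* = diag_mx d.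
  rewrite -ed /Q' !trmx_mul !map_mxM trmxCK !mulmxA /H; congr (_ *m _).
  by have e := @mulmxKtV C n n n (M *m Q) M Mu erefl; rewrite e.
clearbody Q'.
split.
  move=> i m; rewrite inE => dm.
  have : Q' *m diag_mx d = diag_mx d by rewrite -G mulmxA QQ'.
  move/(congr1 (fun X : 'M[C]_n => X i m)); rewrite mul_mx_diag !mxE.
  move=> h; apply: (mulIf dm); rewrite h.
  by case: (eqVneq i m) => [->|im]; rewrite ?mulr1n ?mul1r ?mulr0n ?mul0r.
move=> m j; rewrite inE negbK => /eqP dm.
have := congr1 (fun X : 'M[C]_n => X m m) G; rewrite !mxE eqxx mulr1n dm.
move/eqP; rewrite psumr_eq0 => [|k _]; last by rewrite !mxE mul_conjC_ge0.
move/allP/(_ j (mem_index_enum _)); rewrite !mxE mul_conjC_eq0 => /eqP.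
done.
Qed.

Lemma pinQ (C : numClosedFieldType) n (A : 'M[C]_n) (NZ : {set 'I_n}) (a b : 'I_n) :
  (forall i m, m \in NZ -> A i m = (i == m)%:R) ->
  (forall m j, m \notin NZ -> A m j = 0) -> a \in NZ -> b \notin NZ ->
  pinch (pinch A (fun i => (i == a) || (i == b)) (fun i => (i == a) || (i == b)))
        (fun i => (i \in NZ) != (i == a)) (fun i => (i \in NZ) != (i == a))
  = Dset C NZ + A a b *: delta_mx a b.
Proof.
move=> c1 c2 aNZ bNZ; have ab : a != b by apply: contraNneq bNZ => <-.
apply/matrixP => i j; rewrite !mxE.
case: (boolP (j \in NZ)) => jNZ.
  have jb : (j == b) = false by apply/negbTE; apply: contraNneq bNZ => <-.
  rewrite c1 // jb andbF mulr0 addr0.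
  case: (eqVneq i j) => [->|ij]; first by rewrite jNZ jb !eqxx mulr1n.
  by rewrite !if_same mulr0n.
case: (boolP (i \in NZ)) => iNZ; last first.
  have ia : (i == a) = false by apply/negbTE; apply: contraNneq iNZ => ->.
  by rewrite c2 // !if_same ia mulr0 addr0 mul0rn.
have ja : (j == a) = false by apply/negbTE; apply: contraNneq jNZ => ->.
have ij : (i == j) = false by apply/negbTE; apply: contraNneq jNZ => <-.
rewrite ij mulr0n add0r ja /=.
case: (eqVneq i a) => [->|ia] /=; last by rewrite mulr0.
case: (eqVneq j b) => [->|jb] /=; first by rewrite mulr1.
by rewrite mulr0.
Qed.

Lemma pinch_lin (C : numClosedFieldType) n (A B : 'M[C]_n) p q :
  pinch (A - B) p q = pinch A p q - pinch B p q.
Proof. by apply/matrixP => i j; rewrite !mxE; case: ifP; rewrite ?subr0. Qed.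

Lemma pinch1 (C : numClosedFieldType) n p :
  pinch (1%:M : 'M[C]_n) p p = 1%:M.
Proof.
apply/matrixP => i j; rewrite !mxE; case: (eqVneq i j) => [->|ij]; first by rewrite eqxx.
by rewrite if_same.
Qed.

Lemma DsetC (C : numClosedFieldType) n (S : {set 'I_n}) :
  1%:M - Dset C S = Dset C (~: S).
Proof.
apply/matrixP => i j; rewrite !mxE inE.
case: (eqVneq i j) => [->|ij]; last by rewrite !mulr0n subr0.
by case: (j \in S); rewrite !mulr1n ?subrr ?subr0.
Qed.

Lemma trnorm (C : numClosedFieldType) n (N : 'M[C]_n -> C) :
  is_mxnorm N -> unitarily_invariant N ->
  is_mxnorm (fun X => N X^T) /\ unitarily_invariant (fun X => N X^T).
Proof.
move=> [N0 Ndef NZ ND] NU; split.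
  split => //.
  - by move=> X /Ndef /(congr1 trmx); rewrite trmxK trmx0.
  - by move=> a X; rewrite linearZ /= NZ.
  - by move=> X Y; rewrite linearD /= ND.
move=> U V X Uu Vu /=; rewrite !trmx_mul mulmxA NU ?trmx_unitary //.
Qed.

Lemma DsetT (C : numClosedFieldType) n (S : {set 'I_n}) : (Dset C S)^T = Dset C S.
Proof. by rewrite /Dset tr_diag_mx. Qed.

Theorem lemma2p3 (C : numClosedFieldType) (n : nat) (N : 'M[C]_n -> C)
  (P Q : 'M[C]_n) :
  is_mxnorm N -> unitarily_invariant N ->
  is_projection P -> is_idempotent Q ->
  N P = N Q -> N (1%:M - P) = N (1%:M - Q) ->
  adj_mx Q = Q.
Proof.
move=> Nn NU Pp Qi ePQ eIPQ.
have [MP MPu [SP eP]] := projdiag Pp.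
have [M Mu [NZ [c1 c2]]] := idemstruct Qi.
have Mtu : M^t* \is unitarymx by rewrite trmxC_unitary.
have MPtu : MP^t* \is unitarymx by rewrite trmxC_unitary.
have conj1 : forall (W A : 'M[C]_n), W \is unitarymx ->
    W *m (1%:M - A) *m W^t* = 1%:M - W *m A *m W^t*.
  move=> W A Wu; rewrite mulmxBr mulmx1 mulmxBl (unitarymxP Wu) //.
set Q' := M *m Q *m M^t* in c1 c2.
have NQ : N Q = N Q' by rewrite /Q' NU.
have NIQ : N (1%:M - Q) = N (1%:M - Q') by rewrite /Q' -conj1 // NU.
have NP : N P = N (Dset C SP) by rewrite -eP NU.
have NIP : N (1%:M - P) = N (Dset C (~: SP)) by rewrite -DsetC -eP -conj1 // NU.
suff H : forall a b, a \in NZ -> b \notin NZ -> Q' a b = 0.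
  have eQ : Q = M^t* *m Q' *m M.
    by rewrite /Q' !mulmxA (mulmx1C (unitarymxP Mu)) mul1mx mulmxKtV.
  clearbody Q'.
  have eQ' : Q' = Dset C NZ.
    apply/matrixP => i j; rewrite !mxE.
    case: (boolP (j \in NZ)) => jNZ.
      rewrite c1 //; case: (eqVneq i j) => [->|ij]; first by rewrite jNZ.
      by rewrite mulr0n.
    case: (boolP (i \in NZ)) => iNZ.
      have ij : i != j by apply: contraNneq jNZ => <-.
      by rewrite H // (negbTE ij) mulr0n.
    by rewrite c2 // mul0rn.
  rewrite adjE eQ !trmx_mul !map_mxM trmxCK mulmxA; congr (_ *m _ *m _).
  rewrite eQ' DsetT; apply/matrixP => i j; rewrite !mxE.
  by case: (i == j); case: (i \in NZ); rewrite ?mulr0n ?mulr1n ?rmorph0 ?rmorph1.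
move=> a b aNZ bNZ; apply/eqP; apply/negP => /negP y0.
have [N0 Ndef NZn ND] := Nn.
case: (leqP #|SP| #|NZ|) => hc.
  apply: (strict_off Nn NU aNZ bNZ y0); rewrite -(pinQ c1 c2 aNZ bNZ).
  apply: le_trans (pinch_le _ _ _ Nn NU) _; apply: le_trans (pinch_le _ _ _ Nn NU) _.
  rewrite -NQ -ePQ NP; exact: Dcard.
have hc' : (#|~: SP| <= #|~: NZ|)%N.
  have := cardsC NZ; have := cardsC SP; move: hc; set T := #|_|; lia.
have [Ntn NtU] := trnorm Nn NU.
have bZ : b \in ~: NZ by rewrite inE.
have aZ : a \notin ~: NZ by rewrite inE negbK.
have y0' : - Q' a b != 0 by rewrite oppr_eq0.
apply: (strict_off Ntn NtU bZ aZ y0') => /=.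
rewrite DsetT linearD /= DsetT linearZ /= trmx_delta.
have -> : Dset C (~: NZ) + (- Q' a b) *: delta_mx a b =
    pinch (pinch (1%:M - Q') (fun i => (i == a) || (i == b)) (fun i => (i == a) || (i == b)))
        (fun i => (i \in NZ) != (i == a)) (fun i => (i \in NZ) != (i == a)).
  by rewrite !pinch_lin !pinch1 (pinQ c1 c2 aNZ bNZ) opprD addrA DsetC scaleNr.
apply: le_trans (pinch_le _ _ _ Nn NU) _; apply: le_trans (pinch_le _ _ _ Nn NU) _.
rewrite -NIQ -eIPQ NIP; exact: Dcard.
Qed.
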